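(* Let $n\ge 3$ and let $L^B$ be a blow-up of $L\cong\mathbf{2}^n$ with atoms $q_1,\dots,q_n$. Then: (1) if $L^B\cong L\cong\mathbf{2}^n$ (all chains are single elements), then $\beta(G(L^B)_{SR})=n-2$; (2) if $|[q_i]|\ge2$ for every $1\le i\le n$, then $\beta(G(L^B)_{SR})=2n-2$; (3) if exactly $m$ of the indices $i$ satisfy $|[q_i]|=1$, then $\beta(G(L^B)_{SR})=2n-m-2$.
   Context: Blow-up: for $L\cong\mathbf{2}^n$ with atoms $q_1,\dots,q_n$, replace each $a\in L\setminus\{0,1\}$ by a finite chain $C_a$: $a=a^1\lessdot\cdots\lessdot a^{k_a}$ ($k_a\ge1$), keep $0,1$; elements of one chain are ordered along it, and for $u\in C_a,v\in C_b$ with $a\ne b$ ($C_0=\{0\},C_1=\{1\}$), $u\le v$ iff $a<b$ in $L$. $G(L^B)$ is the zero-divisor graph of $L^B$ (vertices: nonzero elements with a nonzero element meeting them in $0$; adjacency: meet $=0$). $[x]=\{y:y^\perp=x^\perp\}$ with $x^\perp=\{z:x\wedge z=0\}$; so $[q_i]=C_{q_i}$. In a graph $G$, $u$ is maximally distant from $v$ if $d(v,w)\le d(u,v)$ for all neighbours $w$ of $u$; $u,v$ are mutually maximally distant if each is maximally distant from the other; the strong resolving graph $G_{SR}$ has as vertices those $u$ which are mutually maximally distant with some vertex, with $u,v$ adjacent iff mutually maximally distant. $\beta$ denotes the independence number. *)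

(* Defs.v *)
From mathcomp Require Import all_boot.
Set Implicit Arguments. Unset Strict Implicit. Unset Printing Implicit Defensive.

Definition walkn (T : finType) (e : rel T) (m : nat) (u v : T) : bool :=
  [exists p : m.-tuple T, path e u p && (last u p == v)].

(* graph distance; the value #|T| encodes "infinity" (no walk), since any
   finite distance is < #|T| *)
Definition gdist (T : finType) (e : rel T) (u v : T) : nat :=
  find (fun m => walkn e m u v) (iota 0 #|T|).

Definition maxdist (T : finType) (e : rel T) (u v : T) : bool :=
  [forall w, e u w ==> (gdist e v w <= gdist e u v)].

(* mutually maximally distant = adjacency in the strong resolving graph *)
Definition mmd (T : finType) (e : rel T) (u v : T) : bool :=
  maxdist e u v && maxdist e v u.

Definition SRvert (T : finType) (e : rel T) (u : T) : bool := [exists v, mmd e u v].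

Definition SR_indep (T : finType) (e : rel T) (S : {set T}) : bool :=
  [forall u in S, SRvert e u] &&
  [forall u in S, forall v in S, (u != v) ==> ~~ mmd e u v].

Definition beta_SR (T : finType) (e : rel T) : nat :=
  \max_(S : {set T} | SR_indep e S) #|S|.

(* length of the chain C_a; C_0 = {0}, C_1 = {1}; otherwise k a (assumed >= 1) *)
Definition chainlen n (k : {set 'I_n} -> nat) (a : {set 'I_n}) : nat :=
  (if (a == set0) || (a == setT) then 0 else (k a).-1).+1.

(* element a^(j+1) of the chain C_a is encoded as Tagged a j *)
Notation LB n k := {a : {set 'I_n} & 'I_(chainlen k a)}.

Definition leB n (k : {set 'I_n} -> nat) (x y : LB n k) : bool :=
  ((tag x == tag y) && (tagged x <= tagged y)) || (tag x \proper tag y).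

Definition isBotB n (k : {set 'I_n} -> nat) (x : LB n k) : bool :=
  [forall w, leB x w].

Definition meet0 n (k : {set 'I_n} -> nat) (x y : LB n k) : bool :=
  [forall z, (leB z x && leB z y) ==> isBotB z].

Definition zdvertex n (k : {set 'I_n} -> nat) (x : LB n k) : bool :=
  ~~ isBotB x && [exists y, ~~ isBotB y && meet0 x y].

Notation ZDV n k := {x : LB n k | zdvertex x}.

Definition zd_adj n (k : {set 'I_n} -> nat) : rel (ZDV n k) :=
  fun u v => meet0 (val u) (val v).

Definition perpB n (k : {set 'I_n} -> nat) (x : LB n k) : {set LB n k} :=
  [set z | meet0 x z].
Definition clsB n (k : {set 'I_n} -> nat) (x : LB n k) : {set LB n k} :=
  [set y | perpB y == perpB x].

Definition atomB n (k : {set 'I_n} -> nat) (i : 'I_n) : LB n k :=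
  @Tagged _ [set i] (fun a => 'I_(chainlen k a)) ord0.

(* Main.v *)
Require Import Defs.
From mathcomp Require Import all_boot zify.
Set Implicit Arguments. Unset Strict Implicit. Unset Printing Implicit Defensive.

Lemma walkn0 (T : finType) (e : rel T) u v : walkn e 0 u v = (u == v).
Proof.
apply/existsP/idP => [[p /andP[_ /eqP <-]]|/eqP <-].
  by rewrite tuple0.
by exists [tuple]; rewrite /= eqxx.
Qed.

Lemma walknS (T : finType) (e : rel T) m u v :
  walkn e m.+1 u v = [exists w, e u w && walkn e m w v].
Proof.
apply/existsP/existsP => [[p]|[w /andP[euw /existsP[p /andP[pp lp]]]]].
  case/tupleP: p => w p /= /andP[/andP[euw pp] lp].
  by exists w; rewrite euw; apply/existsP; exists p; rewrite pp.
by exists [tuple of w :: p]; rewrite /= euw pp.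
Qed.

Lemma find_iota_eq (P : pred nat) d N :
  P d -> (forall m, m < d -> ~~ P m) -> d < N -> find P (iota 0 N) = d.
Proof.
move=> Pd Hlt dN.
have -> : N = d + (N - d) by lia.
rewrite iotaD find_cat.
have -> : has P (iota 0 d) = false.
  apply/negbTE/hasPn => m; rewrite mem_iota add0n => /andP[_]; exact: Hlt.
rewrite size_iota add0n.
have -> : N - d = (N - d).-1.+1 by lia.
by rewrite /= Pd addn0.
Qed.

Definition laminar (T : finType) (F : {set {set T}}) :=
  forall A B, A \in F -> B \in F -> (A :&: B == set0) || (A \subset B) || (B \subset A).

Lemma laminar_bound (T : finType) (N : nat) : forall (X : {set T}) (F : {set {set T}}),
  #|X| <= N -> (forall A, A \in F -> A != set0 /\ A \subset X) -> laminar F ->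
  #|F| <= (2 * #|X|).-1.
Proof.
elim: N => [|N IH] X F XN HF LF.
  have X0 : X = set0 by apply/eqP; rewrite -cards_eq0; lia.
  suff -> : F = set0 by rewrite cards0.
  apply/setP => A; rewrite inE; apply/negbTE/negP => /HF [/negP nA sA].
  by apply: nA; rewrite -subset0 -X0.
case: (set_0Vmem X) => [X0|[x xX]].
  suff -> : F = set0 by rewrite cards0.
  apply/setP => A; rewrite inE; apply/negbTE/negP => /HF [/negP nA sA].
  by apply: nA; rewrite -subset0 -X0.
pose P := [set A : {set T} | x \in A].
pose F2 := F :&: P. pose F1 := F :\: P.
pose H := [set A :\ x | A in F2 :\ [set x]].
pose G := F1 :|: H.
have cF : #|F| = #|F1| + #|F2| by rewrite addnC cardsID.
have cF2 : #|F2| = ([set x] \in F2) + #|F2 :\ [set x]| by rewrite -cardsD1.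
have cH : #|H| = #|F2 :\ [set x]|.
  apply: card_in_imset => A B; rewrite !inE => /and3P[_ _ xA] /and3P[_ _ xB] E.
  by rewrite -(setD1K xA) -(setD1K xB) E.
have cG : #|G| = #|F1| + #|H| - #|F1 :&: H| by rewrite cardsU.
have F1sub : forall A, A \in F1 -> x \notin A /\ A \in F.
  by move=> A; rewrite !inE => /andP[].
have Hmem : forall B, B \in H -> exists A, [/\ A \in F, x \in A, A != [set x] & B = A :\ x].
  move=> B /imsetP[A]; rewrite !inE => /and3P[nA AF xA] ->.
  by exists A.
have cI : #|F1 :&: H| <= 1.
  apply/card_le1_eqP => B C; rewrite !in_setI => /andP[/F1sub[xB BF] /Hmem[A [AF xA nA EA]]].
  move=> /andP[/F1sub[xC CF] /Hmem[A' [A'F xA' nA' EA']]].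
  have B0 : B != set0 by case: (HF _ BF).
  have C0 : C != set0 by case: (HF _ CF).
  have EAB : A = x |: B by rewrite EA setD1K.
  have EAC : A' = x |: C by rewrite EA' setD1K.
  have key : forall B C, B \in F -> C \in F -> x \notin B -> x \notin C ->
      B != set0 -> x |: B \in F -> x |: C \in F -> (x |: B) \subset (x |: C) -> B = C.
    move=> B1 C1 B1F C1F xB1 xC1 B10 AB AC sBC.
    have sB1C1 : B1 \subset C1.
      apply/subsetP => y yB1.
      have : y \in x |: C1 by apply: (subsetP sBC); rewrite inE yB1 orbT.
      rewrite !inE => /orP[/eqP yx|//]; by move: xB1; rewrite -yx yB1.
    move: (LF _ _ C1F AB) => /orP[/orP[I0|sCA]|sAC].
    - case/set0Pn: B10 => y yB1; move/eqP/setP: I0 => /(_ y).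
      by rewrite !inE (subsetP sB1C1 _ yB1) yB1 orbT.
    - apply/eqP; rewrite eqEsubset sB1C1 /=; apply/subsetP => y yC1.
      have : y \in x |: B1 by apply: (subsetP sCA).
      rewrite !inE => /orP[/eqP yx|//]; by move: xC1; rewrite -yx yC1.
    - by move: xC1; rewrite (subsetP sAC) // setU11.
  rewrite EAB in AF; rewrite EAC in A'F.
  move: (LF _ _ AF A'F) => /orP[/orP[I0|s1]|s2].
  - by move/eqP/setP: I0 => /(_ x); rewrite !inE eqxx.
  - by apply/esym; apply: key.
  - exact: key.
have F1X0 : X :\ x = set0 -> #|F1 :&: H| = 0.
  move=> X0; apply/eqP; rewrite cards_eq0; apply/eqP/setP => B; rewrite in_setI in_set0.
  apply/negbTE/negP => /andP[/F1sub[xB BF] _].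
  case: (HF _ BF) => /set0Pn[y yB] sB.
  have : y \in X :\ x by rewrite !inE (subsetP sB _ yB) andbT; apply/eqP => yx; move: xB; rewrite -yx yB.
  by rewrite X0 inE.
have bG : #|G| <= (2 * #|X :\ x|).-1.
  apply: IH.
  - by move: XN; rewrite (cardsD1 x X) xX; lia.
  - move=> B; rewrite inE => /orP[/F1sub[xB BF]|/Hmem[A [AF xA nA ->]]].
      case: (HF _ BF) => B0 sB; split => //; apply/subsetP => y yB.
      rewrite !inE (subsetP sB _ yB) andbT; apply/eqP => yx; move: xB; rewrite -yx yB //.
    case: (HF _ AF) => A0 sA; split.
      case: (set_0Vmem (A :\ x)) => [E|[y yA]]; last by apply/set0Pn; exists y.
      exfalso; move/negP: nA; apply; rewrite eqEsubset sub1set xA andbT.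
      apply/subsetP => y yA; rewrite inE; apply/negPn/negP => nyx.
      by move/setP: E => /(_ y); rewrite !inE nyx yA.
    apply/subsetP => y; rewrite !inE => /andP[-> /(subsetP sA) ->].
    by [].
  - move=> B C; rewrite !in_setU.
    have hyp : forall B C, B \in F -> x \notin B -> C \in F -> x \in C ->
      ((C :\ x) :&: B == set0) || ((C :\ x) \subset B) || (B \subset (C :\ x)).
      move=> B1 C1 B1F xB1 C1F xC1.
      move: (LF _ _ C1F B1F) => /orP[/orP[I0|sCB]|sBC].
      + apply/orP; left; apply/orP; left; apply/eqP/setP => y; move/eqP/setP: I0 => /(_ y).
        by rewrite !inE; case: (y == x); case: (y \in C1); case: (y \in B1).
      + by move: xB1; rewrite (subsetP sCB).
      + apply/orP; right; apply/subsetP => y yB1; rewrite !inE (subsetP sBC _ yB1) andbT.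
        by apply/eqP => yx; move: xB1; rewrite -yx yB1.
    move=> /orP[/F1sub[xB BF]|/Hmem[A [AF xA nA ->]]] /orP[/F1sub[xC CF]|/Hmem[A' [A'F xA' nA' ->]]].
    + exact: LF.
    + move: (hyp _ _ BF xB A'F xA') => /orP[/orP[I0|s1]|s2].
      * by rewrite setIC I0.
      * by rewrite s1 !orbT.
      * by rewrite s2 orbT.
    + exact: hyp.
    + move: (LF _ _ AF A'F) => /orP[/orP[I0|s1]|s2].
      * by move/eqP/setP: I0 => /(_ x); rewrite !inE xA xA'.
      * by rewrite (setSD _ s1) ?orbT.
      * by rewrite (setSD _ s2) ?orbT.
have cX : #|X| = (#|X :\ x|).+1 by rewrite (cardsD1 x X) xX.
have b1 : ([set x] \in F2) <= 1 by case: ([set x] \in F2).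
case: (set_0Vmem (X :\ x)) => [X0|[y yX]].
  move: (F1X0 X0) bG; rewrite X0 cards0 => c0 bG.
  rewrite cX X0 cards0.
  have : #|G| = #|F1| + #|H| by rewrite cG c0 subn0.
  lia.
have : 0 < #|X :\ x| by apply/card_gt0P; exists y.
have : #|F1 :&: H| <= #|F1| by rewrite subset_leq_card // subsetIl.
lia.
Qed.

Section BU.
Variable n : nat.
Variable k : {set 'I_n} -> nat.
Hypothesis hn : 3 <= n.

Local Notation T := (LB n k).

Lemma LB_eq (x y : T) : tag x = tag y -> (tagged x : nat) = tagged y -> x = y.
Proof. by case: x => a i; case: y => b j /= E; subst b => /val_inj ->. Qed.

Lemma chainlen0 : chainlen k set0 = 1.
Proof. by rewrite /chainlen eqxx. Qed.

Lemma ord1_0 c (j : 'I_c) : c = 1 -> (j : nat) = 0.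
Proof. by move=> E; move: j; rewrite E => -[[|]]. Qed.

Lemma leB_tag (x y : T) : leB x y -> tag x \subset tag y.
Proof.
by case/orP => [/andP[/eqP E _]|/proper_sub]; rewrite ?E.
Qed.

Lemma isBotB_tag (x : T) : isBotB x = (tag x == set0).
Proof.
apply/forallP/eqP => [H|E w].
  have := leB_tag (H (@Tagged _ set0 (fun a => 'I_(chainlen k a)) ord0)).
  by rewrite subset0 => /eqP.
rewrite /leB; case: (eqVneq (tag w) set0) => Ew.
  move: x E => [a i] /= E; subst a.
  by rewrite (ord1_0 i chainlen0) leq0n andbT Ew eqxx.
by apply/orP; right; rewrite E proper0.
Qed.

Lemma atom_le (i : 'I_n) (x : T) : i \in tag x -> leB (atomB k i) x.
Proof.
move=> ix; rewrite /leB /atomB /=.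
rewrite leq0n andbT; apply/orP.
case: (eqVneq [set i] (tag x)) => [E|ne]; first by left.
by right; rewrite properEneq ne sub1set ix.
Qed.

Lemma meet0_tag (x y : T) : meet0 x y = (tag x :&: tag y == set0).
Proof.
apply/forallP/idP => [H|E z].
  apply/eqP/setP => i; rewrite !inE; apply/negbTE/negP => /andP[ix iy].
  have := H (atomB k i); rewrite !atom_le //= isBotB_tag /atomB /=.
  by apply/negP; apply/set0Pn; exists i; rewrite inE.
apply/implyP => /andP[/leB_tag zx /leB_tag zy]; rewrite isBotB_tag -subset0 -(eqP E).
by rewrite subsetI zx zy.
Qed.

Lemma zdvertex_tag (x : T) : zdvertex x = (tag x != set0) && (tag x != setT).
Proof.
rewrite /zdvertex isBotB_tag; apply/andP/andP => [[-> /existsP[y /andP[y0 my]]]|[x0 xT]].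
  split => //; apply/eqP => E; move: my y0; rewrite meet0_tag isBotB_tag E.
  by rewrite setTI => ->.
split => //; apply/existsP; exists (@Tagged _ (~: tag x) (fun a => 'I_(chainlen k a)) ord0).
rewrite isBotB_tag meet0_tag /= setICr eqxx andbT.
by apply/eqP => /(congr1 (@setC _)); rewrite setCK setC0; apply/eqP.
Qed.

Local Notation V := (ZDV n k).
Definition tg (u : V) : {set 'I_n} := tag (val u).

Lemma tg0 u : tg u != set0.
Proof. by have := valP u; rewrite zdvertex_tag => /andP[]. Qed.
Lemma tgT u : tg u != setT.
Proof. by have := valP u; rewrite zdvertex_tag => /andP[]. Qed.

Lemma adjE u v : zd_adj u v = (tg u :&: tg v == set0).
Proof. exact: meet0_tag. Qed.

Lemma mkV_proof (a : {set 'I_n}) (h : (a != set0) && (a != setT)) :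
  zdvertex (@Tagged _ a (fun a => 'I_(chainlen k a)) ord0).
Proof. by rewrite zdvertex_tag. Qed.

Definition mkV a h : V := exist (fun x => zdvertex x) _ (@mkV_proof a h).
Lemma tg_mkV a h : tg (@mkV a h) = a.
Proof. by []. Qed.

Lemma tg_eq_neq (u v : V) : tg u != tg v -> u != v.
Proof. by apply: contra => /eqP ->. Qed.

Definition i0 : 'I_n := Ordinal (leq_trans (isT : 0 < 3) hn).
Definition i1 : 'I_n := Ordinal (leq_trans (isT : 1 < 3) hn).

Lemma set1_neqT (i : 'I_n) : [set i] != setT.
Proof.
apply/eqP => /setP E.
case: (eqVneq i i0) => [ei|ne].
  by move: (E i1); rewrite !inE ei.
by move: (E i0); rewrite !inE eq_sym (negbTE ne).
Qed.

Lemma set1_neq0 (i : 'I_n) : [set i] != set0.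
Proof. by apply/set0Pn; exists i; rewrite inE. Qed.

Lemma set1_prop (i : 'I_n) : ([set i] != set0) && ([set i] != setT).
Proof. by rewrite set1_neqT andbT; apply/set0Pn; exists i; rewrite inE. Qed.

Lemma compl_prop (a : {set 'I_n}) : a != set0 -> a != setT -> (~: a != set0) && (~: a != setT).
Proof.
move=> a0 aT; apply/andP; split.
  by apply: contra aT => /eqP/(congr1 (@setC _)); rewrite setCK setC0 => ->.
by apply: contra a0 => /eqP/(congr1 (@setC _)); rewrite setCK setCT => ->.
Qed.


Local Notation e := (@zd_adj n k).

Definition D (u v : V) : nat :=
  if u == v then 0 else if tg u :&: tg v == set0 then 1
  else if tg u :|: tg v != setT then 2 else 3.

Definition cV a (a0 : a != set0) (aT : a != setT) : V := mkV (compl_prop a0 aT).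

Lemma walk1 u v : walkn e 1 u v = e u v.
Proof.
rewrite walknS; apply/existsP/idP => [[w /andP[euw]]|euv].
  by rewrite walkn0 => /eqP <-.
by exists v; rewrite euv walkn0 eqxx.
Qed.

Lemma walk2 u v : walkn e 2 u v = (tg u :|: tg v != setT).
Proof.
rewrite walknS; apply/existsP/idP => [[w /andP[euw]]|H].
  rewrite walk1 !adjE => ewv; apply/negP => /eqP uvT.
  case/set0Pn: (tg0 w) => y yw.
  move: euw ewv; rewrite !adjE => /eqP/setP/(_ y) e1 /eqP/setP/(_ y) e2.
  move/setP: uvT => /(_ y).
  by rewrite !inE yw /= ?andbT in e1 e2 *; rewrite e1 e2.
have a0 : ~: (tg u :|: tg v) != set0.
  by apply: contra H => /eqP/(congr1 (@setC _)); rewrite setCK setC0 => ->.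
have aT : ~: (tg u :|: tg v) != setT.
  apply: contra (tg0 u) => /eqP/setP E; apply/eqP/setP => y; move: (E y).
  by rewrite !inE => /negP; case: (y \in tg u) => //= _.
exists (mkV (introT andP (conj a0 aT))).
rewrite walk1 !adjE tg_mkV; apply/andP; split; apply/eqP/setP => y; rewrite !inE.
  by case: (y \in tg u).
by case: (y \in tg v); rewrite ?orbT ?andbF.
Qed.

Lemma walk3 u v : tg u :|: tg v = setT -> walkn e 3 u v.
Proof.
move=> E; rewrite walknS; apply/existsP; exists (cV (tg0 u) (tgT u)).
apply/andP; split; first by rewrite adjE tg_mkV setICr.
rewrite walknS; apply/existsP; exists (cV (tg0 v) (tgT v)).
apply/andP; split; last by rewrite walk1 adjE tg_mkV setIC setICr.
by rewrite adjE !tg_mkV -setCU E setCT.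
Qed.

Lemma cardV : 3 < #|{: V}|.
Proof.
pose f := fun i : 'I_n => mkV (set1_prop i).
have finj : injective f by move=> i j /(congr1 tg); rewrite !tg_mkV => /set1_inj.
pose c := cV (set1_neq0 i0) (set1_neqT i0).
have cn : c \notin f @: setT.
  apply/imsetP => -[j _ /(congr1 tg)]; rewrite !tg_mkV => E.
  by have := cardsC [set i0]; rewrite E !cards1 card_ord; lia.
have := max_card (c |: f @: setT); rewrite cardsU1 cn card_imset // cardsT card_ord.
by move=> h; apply: leq_trans h; rewrite /= add1n ltnS.
Qed.

Lemma gdistE u v : gdist e u v = D u v.
Proof.
rewrite /gdist /D; have cv := cardV.
case: (eqVneq u v) => [<-|uv].
  by apply: find_iota_eq => //; [rewrite walkn0 | exact: leq_trans _ cv].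
case: ifP => I0.
  apply: find_iota_eq; [by rewrite walk1 adjE | | exact: leq_trans _ cv].
  by case=> [|m] //= _; rewrite walkn0.
case: ifP => U.
  apply: find_iota_eq; [by rewrite walk2 U | | exact: leq_trans _ cv].
  by case=> [|[|m]] //= _; rewrite ?walkn0 ?walk1 ?adjE ?I0.
apply: find_iota_eq; [by apply: walk3; apply/eqP; move/negbFE: U | | exact: leq_trans _ cv].
by case=> [|[|[|m]]] //= _; rewrite ?walkn0 ?walk1 ?walk2 ?adjE ?I0 ?U.
Qed.


Lemma maxdistP u v : reflect (forall w, e u w -> D v w <= D u v) (maxdist e u v).
Proof.
apply: (iffP forallP) => H w.
  by move=> euw; move: (H w); rewrite euw !gdistE.
by apply/implyP => /H; rewrite !gdistE.
Qed.

Lemma D3 v w : (D v w == 3) = [&& v != w, tg v :&: tg w != set0 & tg v :|: tg w == setT].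
Proof.
rewrite /D; case: (eqVneq v w) => //= _.
case: (tg v :&: tg w == set0) => //=.
by case: (tg v :|: tg w == setT).
Qed.

Lemma D_le3 v w : D v w <= 3.
Proof. by rewrite /D; repeat case: ifP. Qed.

Lemma D_le1 v w : D v w <= 1 -> v = w \/ tg v :&: tg w == set0.
Proof.
rewrite /D; case: (eqVneq v w) => [->|_]; first by left.
case: ifP => [E|_]; first by right.
by case: ifP.
Qed.

Lemma Dneq u v : u != v -> tg u :&: tg v != set0 ->
  D u v = if tg u :|: tg v == setT then 3 else 2.
Proof. by move=> uv I; rewrite /D (negbTE uv) (negbTE I); case: (_ == setT). Qed.

Lemma adj_cV u : e u (cV (tg0 u) (tgT u)).
Proof. by rewrite adjE tg_mkV setICr. Qed.

Lemma neq_cV u : u != cV (tg0 u) (tgT u).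
Proof.
apply: tg_eq_neq; rewrite tg_mkV; apply/eqP => E.
by move/negP: (tg0 u); apply; rewrite -[tg u]setIid {2}E setICr.
Qed.

Lemma md_of u v : u != v -> tg u :&: tg v != set0 -> ~~ (tg u \proper tg v) -> maxdist e u v.
Proof.
move=> uv I nP; apply/maxdistP => w; rewrite adjE => euw.
rewrite (Dneq uv I).
case: (eqVneq (tg u :|: tg v) setT) => U; first by rewrite D_le3.
have : D v w != 3.
  rewrite D3; apply/negP => /and3P[vw I2 U2].
  move/negP: nP; apply; rewrite properEneq; apply/andP; split.
    by apply: contra I2 => /eqP E; rewrite -E.
  apply/subsetP => y yu; move/eqP/setP: euw => /(_ y); move/setP: (eqP U2) => /(_ y).
  rewrite !inE yu /= => Hy Hw; move: Hy; rewrite Hw.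
  by case: (y \in tg v).
by have := D_le3 v w; lia.
Qed.

Lemma md_neq u : ~~ maxdist e u u.
Proof.
apply/negP => /maxdistP /(_ _ (adj_cV u)).
by rewrite /D eqxx (negbTE (neq_cV u)) tg_mkV setICr eqxx.
Qed.

Lemma md_disj u v : maxdist e u v -> u != v -> tg u :&: tg v == set0 ->
  tg v = ~: tg u /\ #|tg v| <= 1.
Proof.
move=> /maxdistP md uv I.
have Duv : D u v = 1 by rewrite /D (negbTE uv) I.
split.
  case: (D_le1 (_ : D v (cV (tg0 u) (tgT u)) <= 1)).
  - by rewrite -Duv; apply: md; apply: adj_cV.
  - by move=> ->; rewrite tg_mkV.
  rewrite tg_mkV => I2; exfalso; move/negP: (tg0 v); apply; apply/eqP/setP => y.
  move/eqP/setP: I => /(_ y); move/eqP/setP: I2 => /(_ y); rewrite !inE.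
  by case: (y \in tg u); case: (y \in tg v).
apply/card_le1_eqP => y z yv zv.
have ad : e u (mkV (set1_prop y)).
  rewrite adjE tg_mkV; apply/eqP/setP => x; move/eqP/setP: I => /(_ x); rewrite !inE.
  by case: (eqVneq x y) => [->|_]; rewrite ?yv ?andbF.
case: (D_le1 (_ : D v (mkV (set1_prop y)) <= 1)).
- by rewrite -Duv; apply: md.
- by move=> E; move: zv; rewrite E tg_mkV inE => /eqP.
rewrite tg_mkV => /eqP/setP/(_ y); by rewrite !inE yv eqxx.
Qed.

Lemma md_nproper u v : maxdist e u v -> ~~ (tg u \proper tg v).
Proof.
move=> /maxdistP md; apply/negP => P.
have uv : u != v by apply: tg_eq_neq; apply/eqP => E; move: P; rewrite E; by case/properP => _ [y ->].
have sub := proper_sub P.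
have I : tg u :&: tg v != set0 by rewrite (setIidPl sub) tg0.
have U : tg u :|: tg v != setT by rewrite (setUidPr sub) tgT.
have := md _ (adj_cV u); rewrite (Dneq uv I) (negbTE U).
have : D v (cV (tg0 u) (tgT u)) == 3.
  rewrite D3 tg_mkV; apply/and3P; split.
  - apply: tg_eq_neq; rewrite tg_mkV; apply/eqP => E; move/negP: (tg0 u); apply.
    by rewrite -(setIidPl sub) E setICr.
  - case/properP: P => _ [y yv yu]; apply/set0Pn; exists y; by rewrite !inE yv.
  - apply/eqP/setP => y; rewrite !inE; case yu: (y \in tg u) => /=.
      by rewrite (subsetP sub _ yu).
    by rewrite orbT.
by move/eqP => ->.
Qed.

Lemma mmdE u v : mmd e u v =
  [&& u != v, tg u :&: tg v != set0, ~~ (tg u \proper tg v) & ~~ (tg v \proper tg u)].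
Proof.
apply/andP/and4P => [[m1 m2]|[uv I p1 p2]].
  have uv : u != v by apply: contraNneq (md_neq u) => E; rewrite {2}E.
  split => //; rewrite ?md_nproper //.
  apply/negP => I.
  have vu : v != u by rewrite eq_sym.
  case: (md_disj m1 uv I) => E1 c1.
  case: (md_disj m2 vu (_ : tg v :&: tg u == set0)) => [|E2 c2]; first by rewrite setIC.
  have := cardsC (tg u); rewrite -E1 card_ord; lia.
split; apply: md_of => //; [by rewrite eq_sym | by rewrite setIC].
Qed.


Definition Ms : {set 'I_n} := [set i : 'I_n | chainlen k [set i] == 1].

Lemma perp_eq (y : T) (i : 'I_n) : (perpB y == perpB (atomB k i)) = (tag y == [set i]).
Proof.
apply/eqP/eqP => [E|E].
  apply/setP => j; rewrite inE.
  move/setP: E => /(_ (atomB k j)); rewrite !inE !meet0_tag /atomB /=.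
  case: (eqVneq j i) => [->|ji].
    rewrite setIid (negbTE (set1_neq0 i)) => /negbT/set0Pn[x].
    rewrite !inE => /andP[xy /eqP xi]; by rewrite -xi xy ?inE ?eqxx.
  have -> : [set i] :&: [set j] == set0.
    by apply/eqP/setP => x; rewrite !inE; case: (eqVneq x i) => // ->; rewrite eq_sym (negbTE ji).
  move/eqP/setP/(_ j); by rewrite !inE eqxx andbT => ->.
by apply/setP => z; rewrite !inE !meet0_tag E.
Qed.

Lemma cls_card i : #|clsB (atomB k i)| = chainlen k [set i].
Proof.
have -> : clsB (atomB k i) =
    [set @Tagged _ [set i] (fun a => 'I_(chainlen k a)) j | j : 'I_(chainlen k [set i])].
  apply/setP => y; rewrite inE perp_eq; apply/eqP/imsetP => [E|[j _ ->]] //.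
  by case: y E => a j /= E; subst a; exists j.
rewrite card_imset ?card_ord //.
by move=> j1 j2 /eqP; rewrite eq_Tagged => /eqP.
Qed.

Definition lam (A B : {set 'I_n}) := (A :&: B == set0) || (A \subset B) || (B \subset A).

Lemma lam_sym A B : lam A B = lam B A.
Proof. by rewrite /lam setIC -orbA [(_ \subset _) || _]orbC orbA. Qed.

Lemma lam1 i B : lam [set i] B.
Proof.
rewrite /lam; case iB: (i \in B); first by rewrite sub1set iB orbT.
apply/orP; left; apply/orP; left; apply/eqP/setP => x; rewrite !inE.
by case: (eqVneq x i) => // ->; rewrite iB.
Qed.

Lemma lamT A : lam A setT.
Proof. by rewrite /lam subsetT orbT. Qed.

Lemma not_mmd_lam u v : u != v -> ~~ mmd e u v -> lam (tg u) (tg v).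
Proof.
move=> uv; rewrite mmdE uv /= /lam; case: eqP => //= _.
by rewrite negb_and !negbK => /orP[/proper_sub ->|/proper_sub ->]; rewrite ?orbT.
Qed.

Lemma lam_not_mmd u v : tg u != tg v -> lam (tg u) (tg v) -> ~~ mmd e u v.
Proof.
move=> ne /orP[/orP[I|s]|s]; rewrite mmdE; apply/negP => /and4P[_ I2 p1 p2].
- by rewrite I in I2.
- by move/negP: p1; apply; rewrite properEneq ne s.
- by move/negP: p2; apply; rewrite properEneq eq_sym ne s.
Qed.

Lemma upper S : SR_indep e S -> #|S| + #|Ms| + 2 <= 2 * n.
Proof.
case/andP => /forall_inP Hv /forall_inP Hi.
have nm : {in S &, forall u v, u != v -> lam (tg u) (tg v)}.
  move=> u v uS vS uv; apply: not_mmd_lam => //.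
  by move/forall_inP: (Hi u uS) => /(_ v vS) /implyP /(_ uv).
have inj : {in S &, injective tg}.
  move=> u v uS vS E; apply/eqP; apply/negPn/negP => uv.
  have := nm u v uS vS uv; rewrite /lam E setIid (negbTE (tg0 v)) /=.
  have : ~~ mmd e u v by move/forall_inP: (Hi u uS) => /(_ v vS) /implyP /(_ uv).
  rewrite mmdE uv /= E setIid tg0 /= => H _; move: H; rewrite properEneq eqxx.
  by [].
have single : forall u i, u \in S -> tg u = [set i] -> i \notin Ms.
  move=> u i uS Eu; rewrite inE; apply/negP => /eqP c1.
  case/existsP: (Hv u uS) => v; rewrite mmdE Eu => /and4P[uv I p1 _].
  have iv : i \in tg v.
    case/set0Pn: I => x; rewrite !inE => /andP[/eqP -> //].
  have Ev : tg v = [set i].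
    apply/eqP; move: p1; rewrite properEneq sub1set iv andbT negbK eq_sym.
    by [].
  move/negP: uv; apply; apply/eqP/val_inj/LB_eq; first by rewrite -/(tg u) -/(tg v) Eu Ev.
  rewrite (@ord1_0 _ (tagged (val u))); last by rewrite -/(tg u) Eu.
  by rewrite (@ord1_0 _ (tagged (val v))) // -/(tg v) Ev.
pose A1 := tg @: S. pose A2 := [set [set i] | i in Ms]. pose A3 := [set (setT : {set 'I_n})].
pose F := A1 :|: A2 :|: A3.
have c1 : #|A1| = #|S| by apply: card_in_imset.
have c2 : #|A2| = #|Ms| by apply: card_imset; apply: set1_inj.
have i12 : A1 :&: A2 = set0.
  apply/setP => B; rewrite !inE; apply/negbTE/negP => /andP[/imsetP[u uS ->] /imsetP[i iM Ei]].
  by move: (single u i uS Ei); rewrite iM.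
have i3 : (A1 :|: A2) :&: A3 = set0.
  apply/setP => B; rewrite !inE; apply/negbTE/negP => /andP[/orP[/imsetP[u uS ->]|/imsetP[i iM ->]] /eqP E].
    by move: (tgT u); rewrite E eqxx.
  by move: (set1_neqT i); rewrite E eqxx.
have cF : #|F| = #|S| + #|Ms| + 1.
  by rewrite /F !cardsU i12 i3 !cards0 c1 c2 cards1 !subn0.
have bF : #|F| <= (2 * #|[set: 'I_n]|).-1.
  apply: (@laminar_bound _ n) => //.
  - by rewrite cardsT card_ord.
  - move=> B; rewrite !inE => /orP[/orP[/imsetP[u _ ->]|/imsetP[i _ ->]]|/eqP ->]; rewrite ?subsetT; split => //.
    + exact: tg0.
    + exact: set1_neq0.
    + by apply/set0Pn; exists i0.
  - move=> B C; rewrite !inE => /orP[/orP[/imsetP[u uS ->]|/imsetP[i _ ->]]|/eqP ->].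
    + move=> /orP[/orP[/imsetP[v vS ->]|/imsetP[j _ ->]]|/eqP ->].
      * case: (eqVneq u v) => [->|uv]; first by rewrite /lam subxx orbT.
        exact: nm.
      * by rewrite -/(lam _ _) lam_sym lam1.
      * exact: lamT.
    + by move=> _; apply: lam1.
    + move=> _; rewrite -/(lam _ _) lam_sym; exact: lamT.
move: bF; rewrite cF cardsT card_ord; lia.
Qed.


Lemma iL_lt : n.-1 < n.
Proof. by rewrite ltn_predL; apply: leq_trans hn. Qed.
Definition iL : 'I_n := Ordinal iL_lt.

Lemma i1_neq_iL : (i1 == iL) = false.
Proof. by apply/negbTE/eqP => /(congr1 val); rewrite /= /i1 /iL /=; lia. Qed.
Lemma i1_neq_i0 : (i1 == i0) = false.
Proof. by apply/negbTE/eqP => /(congr1 val); rewrite /= /i1 /i0 /=. Qed.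

Local Notation Pf t := ([set j : 'I_n | (j : nat) <= t.+1]).

Definition Fam : {set {set 'I_n}} :=
  [set [set i] | i in ~: Ms] :|: [set Pf (nat_of_ord t) | t : 'I_(n-2)].

Lemma Pf_prop (t : 'I_(n-2)) : (Pf t != set0) && (Pf t != setT).
Proof.
apply/andP; split; first by apply/set0Pn; exists i0; rewrite inE.
apply/eqP => /setP /(_ iL); rewrite !inE /iL /=.
by have := ltn_ord t; lia.
Qed.

Lemma Fam_prop a : a \in Fam -> (a != set0) && (a != setT).
Proof.
by rewrite !inE => /orP[/imsetP[i _ ->]|/imsetP[t _ ->]]; [apply: set1_prop | apply: Pf_prop].
Qed.

Lemma Fam_lam a b : a \in Fam -> b \in Fam -> lam a b.
Proof.
rewrite !inE => /orP[/imsetP[i _ ->]|/imsetP[t _ ->]]; first by move=> _; apply: lam1.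
move=> /orP[/imsetP[i _ ->]|/imsetP[s _ ->]]; first by rewrite lam_sym lam1.
rewrite /lam; case: (leqP t s) => ts.
  by apply/orP; left; apply/orP; right; apply/subsetP => j; rewrite !inE => h; lia.
by apply/orP; right; apply/subsetP => j; rewrite !inE => h; lia.
Qed.

Lemma card_Fam : #|Fam| = (n - #|Ms|) + (n - 2).
Proof.
rewrite /Fam cardsU.
have -> : [set [set i] | i in ~: Ms] :&: [set Pf (nat_of_ord t) | t : 'I_(n-2)] = set0.
  apply/setP => a; rewrite !inE; apply/negbTE/negP => /andP[/imsetP[i _ ->] /imsetP[t _]].
  move/setP => E; have := E i0; have := E i1; rewrite !inE /= => h1 h0.
  by move: h1; rewrite -(eqP h0) /=.
rewrite cards0 subn0 card_imset; last exact: set1_inj.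
have -> : #|~: Ms| = n - #|Ms| by have := cardsC Ms; rewrite card_ord; lia.
congr (_ + _); rewrite card_imset ?card_ord //.
move=> t s /setP E; apply/val_inj/eqP; rewrite eqn_leq; apply/andP; split.
  case: (leqP t s) => // st.
  have lt : s.+2 < n by have := ltn_ord t; lia.
  by move: (E (Ordinal lt)); rewrite !inE /= => h; lia.
case: (leqP s t) => // st.
have lt : t.+2 < n by have := ltn_ord s; lia.
by move: (E (Ordinal lt)); rewrite !inE /= => h; lia.
Qed.

Definition Slow : {set V} := [set u : V | (tg u \in Fam) && ((tagged (val u) : nat) == 0)].

Lemma Slow_tg_inj : {in Slow &, injective tg}.
Proof.
move=> u v; rewrite !inE => /andP[_ /eqP u0] /andP[_ /eqP v0] E.
by apply/val_inj/LB_eq => //; rewrite u0 v0.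
Qed.

Lemma card_Slow : #|Slow| = (n - #|Ms|) + (n - 2).
Proof.
have E : tg @: Slow = Fam.
  apply/eqP; rewrite eqEsubset; apply/andP; split.
    by apply/subsetP => a /imsetP[u]; rewrite inE => /andP[h _] ->.
  apply/subsetP => a aF; apply/imsetP; exists (mkV (Fam_prop aF)) => //.
  by rewrite inE tg_mkV aF.
by rewrite -card_Fam -E (card_in_imset Slow_tg_inj).
Qed.

Lemma Slow_indep : SR_indep e Slow.
Proof.
apply/andP; split; apply/forall_inP => u; rewrite inE => /andP[uF /eqP u0].
  apply/existsP; move: uF; rewrite inE => /orP[/imsetP[i iM Eu]|/imsetP[t _ Eu]].
    have h1 : 1 < chainlen k [set i].
      have c1 : chainlen k [set i] != 1 by move: iM; rewrite !inE.
      have c0 : 0 < chainlen k [set i] by rewrite /chainlen.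
      lia.
    pose w : T := @Tagged _ [set i] (fun a => 'I_(chainlen k a)) (Ordinal h1).
    have wv : zdvertex w by rewrite zdvertex_tag set1_prop.
    exists (exist _ w wv); rewrite mmdE Eu /tg /= setIid set1_neq0 properEneq eqxx /= andbT.
    apply/eqP => /(congr1 (fun x : V => (tagged (val x) : nat))); by rewrite /= u0.
  pose b : {set 'I_n} := [set i0; iL].
  have bp : (b != set0) && (b != setT).
    apply/andP; split; first by apply/set0Pn; exists i0; rewrite !inE eqxx.
    apply/eqP => /setP /(_ i1); rewrite !inE /=.
    by rewrite ?i1_neq_iL ?i1_neq_i0.
  have tu : tg u = Pf t by [].
  have i1u : i1 \in tg u by rewrite tu inE.
  have iLu : iL \notin tg u by rewrite tu inE /=; have := ltn_ord t; lia.
  have i1b : i1 \notin b.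
    by rewrite !inE ?i1_neq_iL ?i1_neq_i0.
  exists (mkV bp); rewrite mmdE tg_mkV; apply/and4P; split.
  - apply: tg_eq_neq; rewrite tg_mkV; apply/eqP => E; move: iLu; by rewrite E !inE eqxx orbT.
  - apply/set0Pn; exists i0; by rewrite !inE tu inE /= ?eqxx.
  - rewrite properEneq negb_and; apply/orP; right; apply/negP => /subsetP /(_ _ i1u).
    by apply/negP.
  - rewrite properEneq negb_and; apply/orP; right; apply/negP => /subsetP /(_ iL).
    by rewrite !inE eqxx orbT => /(_ isT); apply/negP.
apply/forall_inP => v; rewrite inE => /andP[vF /eqP v0]; apply/implyP => uv.
apply: lam_not_mmd; last exact: Fam_lam.
apply: contra uv => /eqP E; apply/eqP/val_inj/LB_eq => //; by rewrite u0 v0.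
Qed.

Lemma beta_eq : beta_SR e = 2 * n - #|Ms| - 2.
Proof.
have cM : #|Ms| <= n by have := max_card Ms; rewrite card_ord.
apply/eqP; rewrite eqn_leq; apply/andP; split.
  apply/bigmax_leqP => S /upper; lia.
have := @leq_bigmax_cond _ (fun S : {set V} => SR_indep e S) (fun S : {set V} => #|S|) Slow Slow_indep.
rewrite card_Slow => h; apply: leq_trans h; lia.
Qed.

End BU.

Theorem mainTheorem10 (n : nat) (k : {set 'I_n} -> nat)
  (hn : 3 <= n)
  (hk : forall a : {set 'I_n}, a != set0 -> a != setT -> 0 < k a) :
  ((forall a : {set 'I_n}, a != set0 -> a != setT -> k a = 1) ->
     beta_SR (@zd_adj n k) = n - 2)
  /\ ((forall i : 'I_n, 2 <= #|clsB (atomB k i)|) ->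
     beta_SR (@zd_adj n k) = 2 * n - 2)
  /\ (forall m : nat, #|[set i : 'I_n | #|clsB (atomB k i)| == 1]| = m ->
     beta_SR (@zd_adj n k) = 2 * n - m - 2).
Proof.
have ME : [set i : 'I_n | #|clsB (atomB k i)| == 1] = Ms k.
  by apply/setP => i; rewrite !inE cls_card.
split; [|split].
- move=> h1; rewrite (beta_eq k hn).
  have -> : Ms k = setT.
    apply/setP => i; rewrite !inE /chainlen.
    rewrite (negbTE (set1_neq0 i)) (negbTE (set1_neqT hn i)) /=.
    by rewrite (h1 _ (set1_neq0 i) (set1_neqT hn i)).
  rewrite cardsT card_ord; lia.
- move=> h2; rewrite (beta_eq k hn).
  have -> : Ms k = set0.
    apply/setP => i; rewrite !inE -cls_card.
    by apply/negbTE; have := h2 i; case: (#|_| =P 1) => // ->.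
  by rewrite cards0 subn0.
- by move=> m; rewrite ME => <-; apply: beta_eq.
Qed.
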